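(* Let $\mathcal A=\mathbb N_+=\{1,2,\dots\}$, $\Omega=\mathcal A^{\mathbb N}$, and $\mathbb P$ the product measure with $\mathbb P[a_0,\dots,a_{n-1}]=\prod_{j<n}2^{-a_j}$. Let $\Omega_0=\{0,1\}^{\mathbb N}$ with σ-algebra $\mathcal F_0$ generated by cylinders and left shift $T_0$. Define $\theta(a_1,a_2)=1$ if $a_2=a_1+1$ and $0$ otherwise, $\Theta:\Omega\to\Omega_0$ by $(\Theta\omega)_j=\theta(\omega_j,\omega_{j+1})$, and $\mathbb P_0=\mathbb P\circ\Theta^{-1}$. Then (a) $\mathbb P_0$ is $T_0$-invariant; (b) $\mathbb P_0$ is ψ-mixing; (c) for $\omega\in\Omega_0$ with $\omega_j=1$ for all $j\ge0$, $\lim_{n\to\infty}\mathbb P_0(A^\omega_{n+1}\mid A^\omega_n)=0$.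
   Context: Cylinders in $\Omega_0$: $[b_0,\dots,b_{n-1}]_0=\{\omega\in\Omega_0:\omega_j=b_j,0\le j<n\}$, $A_n^\omega=[\omega_0,\dots,\omega_{n-1}]_0$. A probability $Q$ on $(\Omega_0,\mathcal F_0)$ is ψ-mixing if there is $\psi_m\ge0$, $\psi_m\to0$, with $|Q(E\cap T_0^{-(n+m)}F)-Q(E)Q(F)|\le\psi_mQ(E)Q(F)$ for all $m,n\in\mathbb N$, $E$ in the σ-algebra generated by coordinates $0,\dots,n-1$, and $F\in\mathcal F_0$. *)

(* Defs.v *)
From Stdlib Require Import Reals Lra List Classical ClassicalEpsilon.
Open Scope R_scope.

Inductive sigma_gen {X : Type} (G : (X -> Prop) -> Prop) : (X -> Prop) -> Prop :=
| sg_base : forall A, G A -> sigma_gen G A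
| sg_compl : forall A, sigma_gen G A -> sigma_gen G (fun x => ~ A x)
| sg_union : forall A : nat -> X -> Prop,
    (forall i, sigma_gen G (A i)) -> sigma_gen G (fun x => exists i, A i x)
| sg_ext : forall A B, (forall x, A x <-> B x) -> sigma_gen G A -> sigma_gen G B.

Definition Inf (A : R -> Prop) : R :=
  epsilon (inhabits 0) (fun r => is_lub (fun x => A (- x)) (- r)).

(* Letters are encoded as nat: the code k : nat stands for the letter a = k+1. *)
Definition Omega := nat -> nat.
Definition letter (k : nat) : nat := S k.

Definition cyl (l : list nat) : Omega -> Prop :=
  fun w => forall j, (j < length l)%nat -> w j = nth j l 0%nat.

Definition cyl_weight (l : list nat) : R :=
  fold_right (fun k acc => (/2) ^ (letter k) * acc) 1 l.

(* The product measure P, extended to all subsets of Omega as its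
   Caratheodory outer measure (it coincides with P on measurable sets). *)
Definition Pout (S : Omega -> Prop) : R :=
  Inf (fun s => exists C : nat -> list nat,
         (forall w, S w -> exists i, cyl (C i) w) /\
         infinite_sum (fun i => cyl_weight (C i)) s).

Definition Omega0 := nat -> bool.

Definition cyl0 (l : list bool) : Omega0 -> Prop :=
  fun w => forall j, (j < length l)%nat -> w j = nth j l false.

Definition F0 : (Omega0 -> Prop) -> Prop :=
  sigma_gen (fun A => exists l, A = cyl0 l).

Definition Fcoord (n : nat) : (Omega0 -> Prop) -> Prop :=
  sigma_gen (fun A => exists j b, (j < n)%nat /\ A = (fun w : Omega0 => w j = b)).

Definition T0 (w : Omega0) : Omega0 := fun j => w (S j).
Definition T0iter (k : nat) (w : Omega0) : Omega0 := fun j => w (j + k)%nat.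
Definition preim {X Y : Type} (f : X -> Y) (F : Y -> Prop) : X -> Prop :=
  fun x => F (f x).
Definition inter {X : Type} (A B : X -> Prop) : X -> Prop := fun x => A x /\ B x.

Definition Acyl (w : Omega0) (n : nat) : Omega0 -> Prop :=
  fun v => forall j, (j < n)%nat -> v j = w j.

(* theta(a1,a2) = 1 iff a2 = a1 + 1 (invariant under the letter coding) *)
Definition theta (a1 a2 : nat) : bool := Nat.eqb a2 (S a1).
Definition Theta (w : Omega) : Omega0 := fun j => theta (w j) (w (S j)).

Definition P0 (F : Omega0 -> Prop) : R := Pout (preim Theta F).

Definition psi_mixing (Q : (Omega0 -> Prop) -> R) : Prop :=
  exists psi : nat -> R,
    (forall m, 0 <= psi m) /\ Un_cv psi 0 /\
    forall (m n : nat) (E F : Omega0 -> Prop),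
      Fcoord n E -> F0 F ->
      Rabs (Q (inter E (preim (T0iter (n + m)) F)) - Q E * Q F)
        <= psi m * Q E * Q F.

(* Main.v *)
Require Import Defs.
From Stdlib Require Import Reals Lra Lia List Classical ClassicalEpsilon FunctionalExtensionality.
Open Scope R_scope.
Import ListNotations.


Fixpoint psum (f : nat -> R) (n : nat) : R :=
  match n with O => 0 | S n => psum f n + f n end.

Definition hasSum (f : nat -> R) (s : R) : Prop := Un_cv (psum f) s.

Lemma psum_ext f g n : (forall i, f i = g i) -> psum f n = psum g n.
Proof. intros H; induction n; simpl; [lra| rewrite IHn, H; lra]. Qed.

Lemma psum_le f g n : (forall i, f i <= g i) -> psum f n <= psum g n.
Proof. intros H; induction n; simpl; [lra| specialize (H n); lra]. Qed.

Lemma psum_nonneg f n : (forall i, 0 <= f i) -> 0 <= psum f n.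
Proof. intros H; induction n; simpl; [lra| specialize (H n); lra]. Qed.

Lemma psum_mono f n m : (forall i, 0 <= f i) -> (n <= m)%nat -> psum f n <= psum f m.
Proof. intros H Hnm; induction Hnm; simpl; [lra| specialize (H m); lra]. Qed.

Lemma psum_plus f g n : psum (fun i => f i + g i) n = psum f n + psum g n.
Proof. induction n; simpl; lra. Qed.

Lemma psum_scal c f n : psum (fun i => c * f i) n = c * psum f n.
Proof. induction n; simpl; [lra| rewrite IHn; ring]. Qed.

Lemma psum_front f n : psum f (S n) = f O + psum (fun i => f (S i)) n.
Proof. induction n; simpl in *; [lra| rewrite IHn; lra]. Qed.

Lemma psum_single f i n : (forall i, 0 <= f i) -> (i < n)%nat -> f i <= psum f n.
Proof.
  intros H Hi; induction Hi; simpl.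
  - pose proof (psum_nonneg f i H); lra.
  - specialize (H m); lra.
Qed.

Lemma psum_two f i j n : (forall i, 0 <= f i) -> (i < j)%nat -> (j < n)%nat ->
  f i + f j <= psum f n.
Proof.
  intros H Hij Hj; induction Hj; simpl.
  - pose proof (psum_single f i j H Hij); lra.
  - specialize (H m); lra.
Qed.

Lemma psum_swap (h : nat -> nat -> R) n m :
  psum (fun i => psum (fun j => h i j) m) n = psum (fun j => psum (fun i => h i j) n) m.
Proof.
  induction n; simpl.
  - induction m; simpl; lra.
  - rewrite IHn. rewrite <- psum_plus. reflexivity.
Qed.

Lemma psum_add f a b : psum f (a + b) = psum f a + psum (fun i => f (a + i)%nat) b.
Proof.
  induction b; simpl.
  - rewrite Nat.add_0_r; lra.
  - rewrite Nat.add_succ_r; simpl; rewrite IHb; lra.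
Qed.

Lemma lim_le u l b : Un_cv u l -> (forall n, u n <= b) -> l <= b.
Proof.
  intros Hc Hb. destruct (Rle_dec l b) as [|Hn]; [assumption|].
  destruct (Hc (l - b)) as [N HN]; [lra|].
  specialize (HN N (le_n N)). specialize (Hb N). unfold Rdist in HN.
  apply Rabs_def2 in HN; lra.
Qed.

Lemma lim_ge u l b N : Un_cv u l -> (forall n, (n >= N)%nat -> b <= u n) -> b <= l.
Proof.
  intros Hc Hb. destruct (Rle_dec b l) as [|Hn]; [assumption|].
  destruct (Hc (b - l)) as [M HM]; [lra|].
  specialize (HM (max N M) (Nat.le_max_r _ _)). specialize (Hb (max N M) (Nat.le_max_l _ _)).
  unfold Rdist in HM. apply Rabs_def2 in HM; lra.
Qed.

Lemma hasSum_unique f s t : hasSum f s -> hasSum f t -> s = t.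
Proof. apply UL_sequence. Qed.

Lemma hasSum_ge_psum f s n : (forall i, 0 <= f i) -> hasSum f s -> psum f n <= s.
Proof.
  intros H Hs. apply (lim_ge _ _ _ n Hs). intros m Hm. apply psum_mono; auto.
Qed.

Lemma hasSum_bounded f b : (forall i, 0 <= f i) -> (forall n, psum f n <= b) ->
  exists s, hasSum f s /\ s <= b.
Proof.
  intros H Hb.
  assert (Hg : Un_growing (psum f)) by (intro n; simpl; specialize (H n); lra).
  assert (Hu : has_ub (psum f)).
  { exists b. intros x [n ->]. apply Hb. }
  destruct (growing_cv _ Hg Hu) as [l Hl].
  exists l; split; [exact Hl| apply (lim_le _ _ _ Hl Hb)].
Qed.

Lemma hasSum_scal c f s : hasSum f s -> hasSum (fun i => c * f i) (c * s).
Proof.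
  intros H. unfold hasSum.
  assert (Hc : Un_cv (fun _ => c) c).
  { intros e He; exists O; intros; unfold Rdist; rewrite Rminus_diag, Rabs_R0; lra. }
  pose proof (CV_mult _ _ _ _ Hc H) as K.
  intros e He; destruct (K e He) as [N HN]; exists N; intros n Hn.
  rewrite psum_scal; apply HN; auto.
Qed.

Lemma hasSum_plus f g s t : hasSum f s -> hasSum g t -> hasSum (fun i => f i + g i) (s + t).
Proof.
  intros H1 H2. pose proof (CV_plus _ _ _ _ H1 H2) as K.
  intros e He; destruct (K e He) as [N HN]; exists N; intros n Hn.
  rewrite psum_plus; apply HN; auto.
Qed.

Lemma hasSum_ext f g s : (forall i, f i = g i) -> hasSum f s -> hasSum g s.
Proof.
  intros E H e He; destruct (H e He) as [N HN]; exists N; intros n Hn.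
  rewrite <- (psum_ext f g n E); auto.
Qed.

Lemma hasSum_le f g s t : hasSum f s -> hasSum g t -> (forall i, f i <= g i) -> s <= t.
Proof.
  intros H1 H2 Hle. pose proof (CV_minus _ _ _ _ H2 H1) as K.
  assert (0 <= t - s); [|lra].
  apply (lim_ge _ _ _ O K). intros n _. pose proof (psum_le f g n Hle); lra.
Qed.

Lemma hasSum_zero : hasSum (fun _ => 0) 0.
Proof.
  intros e He; exists O; intros n _. unfold Rdist.
  replace (psum (fun _ => 0) n) with 0. rewrite Rminus_diag, Rabs_R0; lra.
  induction n; simpl; lra.
Qed.

Lemma psum_modif f g k n : (forall x, x <> k -> g x = f x) ->
  psum g n = psum f n + (if Nat.ltb k n then g k - f k else 0).
Proof.
  intros H; induction n; simpl; [lra|].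
  rewrite IHn. destruct (Nat.eq_dec n k) as [->|Hne].
  - destruct (Nat.ltb_spec k k); destruct (Nat.ltb_spec k (S k)); try lia. lra.
  - rewrite (H n Hne).
    destruct (Nat.ltb_spec k n); destruct (Nat.ltb_spec k (S n)); try lra; lia.
Qed.

Lemma hasSum_modif f g k s : hasSum f s -> (forall x, x <> k -> g x = f x) ->
  hasSum g (s + (g k - f k)).
Proof.
  intros Hf H e He. destruct (Hf e He) as [N HN]. exists (max N (S k)). intros n Hn.
  rewrite (psum_modif f g k n H).
  destruct (Nat.ltb k n) eqn:E; [|apply Nat.ltb_ge in E; lia].
  unfold Rdist. replace (psum f n + (g k - f k) - (s + (g k - f k))) with (psum f n - s) by ring.
  apply HN; lia.
Qed.

Lemma hasSum_single f s k : hasSum f s -> (forall x, x <> k -> f x = 0) -> s = f k.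
Proof.
  intros Hf H. pose proof (hasSum_modif (fun _ => 0) f k 0 hasSum_zero) as K.
  assert (K' : hasSum f (0 + (f k - 0))) by (apply K; auto).
  rewrite (hasSum_unique _ _ _ Hf K'); ring.
Qed.

Lemma hasSum_two f s i j : (forall x, 0 <= f x) -> hasSum f s -> (i < j)%nat -> f i + f j <= s.
Proof.
  intros H Hs Hij. pose proof (psum_two f i j (S j) H Hij (le_n _)).
  pose proof (hasSum_ge_psum f s (S j) H Hs); lra.
Qed.

Lemma hasSum_one f s i : (forall x, 0 <= f x) -> hasSum f s -> f i <= s.
Proof.
  intros H Hs. pose proof (psum_single f i (S i) H (le_n _)).
  pose proof (hasSum_ge_psum f s (S i) H Hs); lra.
Qed.

Lemma infinite_sum_hasSum f s : infinite_sum f s <-> hasSum f s.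
Proof.
  split; intros H e He; destruct (H e He) as [N HN].
  - exists (S N); intros n Hn. destruct n as [|n]; [lia|].
    replace (psum f (S n)) with (sum_f_R0 f n). apply HN; lia.
    clear. induction n; simpl; [lra| rewrite IHn; reflexivity].
  - exists N; intros n Hn. replace (sum_f_R0 f n) with (psum f (S n)). apply HN; lia.
    clear. induction n; simpl; [lra| rewrite <- IHn; reflexivity].
Qed.

Definition p (a : nat) : R := (/2) ^ (S a).

Lemma p_pos a : 0 < p a.
Proof. unfold p. apply pow_lt; lra. Qed.

Lemma p_le a b : (a <= b)%nat -> p b <= p a.
Proof.
  intros H; induction H; [lra|]. unfold p in *. simpl in *.
  assert (0 < (/2) ^ m) by (apply pow_lt; lra). lra.
Qed.

Lemma psum_p n : psum p n = 1 - (/2) ^ n.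
Proof. induction n; simpl; [lra|]. rewrite IHn. unfold p; simpl. lra. Qed.

Lemma half_pow_pos n : 0 < (/2) ^ n.
Proof. apply pow_lt; lra. Qed.

Lemma hasSum_p : hasSum p 1.
Proof.
  intros e He. destruct (pow_lt_1_zero (/2)) with (y := e) as [N HN].
  { rewrite Rabs_right; lra. } { lra. }
  exists N; intros n Hn. unfold Rdist. rewrite psum_p.
  replace (1 - (/2) ^ n - 1) with (- ((/2)^n)) by ring. rewrite Rabs_Ropp. apply HN; auto.
Qed.

Lemma small_pow e : 0 < e -> exists N, (/2) ^ N < e.
Proof.
  intros He. destruct (pow_lt_1_zero (/2)) with (y := e) as [N HN].
  { rewrite Rabs_right; lra. } { lra. }
  exists N. specialize (HN N (le_n _)). rewrite Rabs_right in HN; auto.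
  left; apply half_pow_pos.
Qed.

Lemma le_of_pow x y : (forall M, x <= y + (/2) ^ M) -> x <= y.
Proof.
  intros H. destruct (Rle_dec x y) as [|Hn]; auto.
  destruct (small_pow (x - y)) as [M HM]; [lra|]. specialize (H M); lra.
Qed.

Lemma le_of_eps x y : (forall e, 0 < e -> x <= y + e) -> x <= y.
Proof.
  intros H. destruct (Rle_dec x y) as [|Hn]; auto. specialize (H ((x-y)/2)); lra.
Qed.

Lemma Inf_lub (A : R -> Prop) : (exists x, A x) -> (forall x, A x -> 0 <= x) ->
  is_lub (fun x => A (- x)) (- Inf A).
Proof.
  intros [x Hx] H0. unfold Inf.
  assert (Hb : bound (fun y => A (- y))).
  { exists 0. intros y Hy. specialize (H0 _ Hy); lra. }
  assert (He : exists y, A (- y)) by (exists (-x); rewrite Ropp_involutive; auto).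
  destruct (completeness _ Hb He) as [m Hm].
  apply (epsilon_spec (inhabits 0) (fun r => is_lub (fun x => A (- x)) (- r))).
  exists (-m). rewrite Ropp_involutive; auto.
Qed.

Lemma Inf_le (A : R -> Prop) a : A a -> (forall x, A x -> 0 <= x) -> Inf A <= a.
Proof.
  intros Ha H0. destruct (Inf_lub A (ex_intro _ a Ha) H0) as [Hu _].
  assert (-a <= - Inf A); [apply Hu; rewrite Ropp_involutive; auto| lra].
Qed.

Lemma Inf_ge (A : R -> Prop) b : (exists x, A x) -> (forall x, A x -> 0 <= x) ->
  (forall x, A x -> b <= x) -> b <= Inf A.
Proof.
  intros Hne H0 Hb. destruct (Inf_lub A Hne H0) as [_ Hl].
  assert (- Inf A <= - b); [|lra]. apply Hl. intros y Hy. specialize (Hb _ Hy); lra.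
Qed.

Lemma Inf_approx (A : R -> Prop) e : (exists x, A x) -> (forall x, A x -> 0 <= x) ->
  0 < e -> exists a, A a /\ a < Inf A + e.
Proof.
  intros Hne H0 He. apply NNPP; intro Hn.
  assert (Inf A + e <= Inf A); [|lra].
  apply Inf_ge; auto. intros x Hx. apply Rnot_lt_le. intro. apply Hn; eauto.
Qed.

Definition w (l : list nat) : R := cyl_weight l.

Lemma w_cons a l : w (a :: l) = p a * w l.
Proof. reflexivity. Qed.

Lemma w_nil : w [] = 1.
Proof. reflexivity. Qed.

Lemma w_pos l : 0 < w l.
Proof. induction l; [rewrite w_nil; lra| rewrite w_cons; pose proof (p_pos a); nra]. Qed.

Definition Cov (S : Omega -> Prop) (C : nat -> list nat) : Prop :=
  forall om, S om -> exists i, cyl (C i) om.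

Definition PA (S : Omega -> Prop) (s : R) : Prop :=
  exists C, Cov S C /\ infinite_sum (fun i => cyl_weight (C i)) s.

Lemma PA_nonneg S s : PA S s -> 0 <= s.
Proof.
  intros [C [_ H]]. apply infinite_sum_hasSum in H.
  apply (lim_ge _ _ _ O H). intros n _. apply psum_nonneg. intro; left; apply w_pos.
Qed.

Definition single (i : nat) : list nat := [i].

Lemma cyl_single i om : cyl [i] om <-> om O = i.
Proof.
  unfold cyl; simpl; split.
  - intros H; apply H; lia.
  - intros H j Hj; destruct j; [auto| lia].
Qed.

Lemma psum_single_w n : psum (fun i => w [i]) n = 1 - (/2)^n.
Proof.
  rewrite <- psum_p. apply psum_ext. intro; rewrite w_cons, w_nil; ring.
Qed.

Lemma PA_ne S : exists s, PA S s.
Proof.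
  destruct (hasSum_bounded (fun i => w [i]) 1) as [s [Hs _]].
  - intro; left; apply w_pos.
  - intro n; rewrite psum_single_w; pose proof (half_pow_pos n); lra.
  - exists s, single. split.
    + intros om _. exists (om O). apply cyl_single; auto.
    + apply infinite_sum_hasSum; exact Hs.
Qed.

Lemma Pout_eq S : Pout S = Inf (PA S).
Proof. reflexivity. Qed.

Lemma Pout_ub S C b : Cov S C -> (forall n, psum (fun i => w (C i)) n <= b) -> Pout S <= b.
Proof.
  intros Hc Hb. destruct (hasSum_bounded _ b (fun i => Rlt_le _ _ (w_pos (C i))) Hb) as [s [Hs Hsb]].
  assert (Inf (PA S) <= s); [|rewrite Pout_eq; lra].
  apply Inf_le; [| apply PA_nonneg]. exists C; split; auto. apply infinite_sum_hasSum; auto.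
Qed.

Lemma Pout_lb S b : (forall C s, Cov S C -> hasSum (fun i => w (C i)) s -> b <= s) -> b <= Pout S.
Proof.
  intros H. unfold Pout; fold (PA S). apply Inf_ge; [apply PA_ne| apply PA_nonneg|].
  intros x [C [Hc Hx]]. apply (H C); auto. apply infinite_sum_hasSum; auto.
Qed.

Lemma Pout_nonneg S : 0 <= Pout S.
Proof.
  apply Pout_lb. intros C s _ Hs. apply (lim_ge _ _ _ O Hs). intros; apply psum_nonneg.
  intro; left; apply w_pos.
Qed.

Lemma Pout_approx S e : 0 < e -> exists C, Cov S C /\ forall n, psum (fun i => w (C i)) n <= Pout S + e.
Proof.
  intros He. destruct (Inf_approx (PA S) e (PA_ne S) (PA_nonneg S) He) as [a [[C [Hc Ha]] Hlt]].
  exists C; split; auto. intro n. apply infinite_sum_hasSum in Ha.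
  pose proof (hasSum_ge_psum _ _ n (fun i => Rlt_le _ _ (w_pos (C i))) Ha).
  rewrite Pout_eq; lra.
Qed.

Lemma Pout_mono S T : (forall om, S om -> T om) -> Pout S <= Pout T.
Proof.
  intros H. apply le_of_eps. intros e He.
  destruct (Pout_approx T e He) as [C [Hc Hb]].
  apply (Pout_ub S C); auto. intros om Hs; apply Hc, H, Hs.
Qed.

Lemma Pout_ext S T : (forall om, S om <-> T om) -> Pout S = Pout T.
Proof.
  intros H; apply Rle_antisym; apply Pout_mono; intros om; apply H.
Qed.

Lemma Pout_le1 S : Pout S <= 1.
Proof.
  apply (Pout_ub S single).
  - intros om _. exists (om O); apply cyl_single; auto.
  - intro n; unfold single; rewrite psum_single_w; pose proof (half_pow_pos n); lra.
Qed.

Lemma w_repeat0 k : w (repeat O k) = (/2) ^ k.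
Proof. induction k; cbn [repeat]; [reflexivity|]. rewrite w_cons, IHk. unfold p; simpl; ring. Qed.

Lemma psum_tiny K n : psum (fun i => w (repeat O (S i + K))) n <= (/2) ^ K.
Proof.
  rewrite (psum_ext _ (fun i => (/2)^K * p i)).
  - rewrite psum_scal, psum_p. pose proof (half_pow_pos K); pose proof (half_pow_pos n). nra.
  - intro i. rewrite w_repeat0, pow_add. unfold p. ring.
Qed.

Lemma Pout_empty Z : (forall om, ~ Z om) -> Pout Z = 0.
Proof.
  intros H. apply Rle_antisym; [|apply Pout_nonneg].
  apply le_of_pow. intro K. rewrite Rplus_0_l.
  apply (Pout_ub Z (fun i => repeat O (S i + K))).
  - intros om Hs; exfalso; apply (H om Hs).
  - intro n; apply psum_tiny.
Qed.

Fixpoint condw (D u : list nat) : R :=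
  match D with
  | [] => 1
  | d :: D' => match u with
               | [] => w D
               | b :: u' => if Nat.eqb d b then condw D' u' else 0
               end
  end.

Lemma condw_nil D : condw D [] = w D.
Proof. destruct D; reflexivity. Qed.

Lemma condw_nonneg D u : 0 <= condw D u.
Proof.
  revert u; induction D; intros u; cbn [condw]; [lra|]. destruct u.
  - left; apply w_pos.
  - destruct (Nat.eqb a n); auto; lra.
Qed.

Lemma psum_indic b c M : 0 <= c -> psum (fun a => if Nat.eqb b a then c else 0) M <= c.
Proof.
  intros Hc. induction M; simpl; [lra|].
  destruct (Nat.eqb_spec b M).
  - subst. assert (psum (fun a => if Nat.eqb M a then c else 0) M = 0); [|lra].
    clear IHM. assert (forall k, (k <= M)%nat -> psum (fun a => if Nat.eqb M a then c else 0) k = 0).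
    { induction k; intros Hk; simpl; [lra|]. rewrite IHk by lia.
      destruct (Nat.eqb_spec M k); [lia|lra]. }
    apply H; lia.
  - lra.
Qed.

Lemma condw_step D u M : psum (fun a => p a * condw D (u ++ [a])) M <= condw D u.
Proof.
  revert D; induction u as [|b u IH]; intros D; cbn [condw app].
  - destruct D as [|d D'].
    + cbn [condw app]. rewrite (psum_ext _ p); [rewrite psum_p; pose proof (half_pow_pos M); lra| intro; ring].
    + rewrite condw_nil, w_cons. rewrite (psum_ext _ (fun a => if Nat.eqb d a then p d * w D' else 0)).
      * apply psum_indic. pose proof (p_pos d); pose proof (w_pos D'); nra.
      * intro a. cbn [condw app]. rewrite condw_nil. destruct (Nat.eqb_spec d a); [subst; ring| ring].
  - destruct D as [|d D'].
    + cbn [condw app]. rewrite (psum_ext _ p); [rewrite psum_p; pose proof (half_pow_pos M); lra| intro; ring].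
    + destruct (Nat.eqb d b) eqn:E.
      * rewrite (psum_ext _ (fun a => p a * condw D' (u ++ [a]))).
        2:{ intro a. cbn [condw app]. rewrite E. reflexivity. }
        cbn [condw]; rewrite E; apply IH.
      * rewrite (psum_ext _ (fun _ => 0)).
        2:{ intro a. cbn [condw app]. rewrite E. ring. }
        cbn [condw]; rewrite E. clear. induction M; simpl; lra.
Qed.

Lemma psum_le_lt f g n : (forall i, (i < n)%nat -> f i <= g i) -> psum f n <= psum g n.
Proof. intros H; induction n; simpl; [lra|]. assert (f n <= g n) by (apply H; lia).
  assert (psum f n <= psum g n) by (apply IHn; intros; apply H; lia). lra. Qed.

Definition Good (C : nat -> list nat) (t : R) (u : list nat) : Prop :=
  forall N, psum (fun i => condw (C i) u) N <= t.

Lemma Good_step C t t' u : Good C t u -> t < t' -> 0 <= t -> exists a, Good C t' (u ++ [a]).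
Proof.
  intros HG Htt Ht. apply NNPP; intro Hn.
  assert (Hall : forall a, exists N, t' < psum (fun i => condw (C i) (u ++ [a])) N).
  { intro a. apply NNPP; intro H2. apply Hn. exists a. intro N. apply Rnot_lt_le. intro; apply H2; eauto. }
  destruct (small_pow ((t' - t) / t')) as [M HM].
  { apply Rdiv_lt_0_compat; lra. }
  assert (HN : forall M, exists N, forall a, (a < M)%nat -> t' < psum (fun i => condw (C i) (u ++ [a])) N).
  { clear HM. induction M0 as [|M0 IH].
    - exists O; intros; lia.
    - destruct IH as [N1 H1]. destruct (Hall M0) as [N2 H2]. exists (max N1 N2).
      intros a Ha. destruct (Nat.eq_dec a M0) as [->|Hne].
      + eapply Rlt_le_trans; [exact H2|]. apply psum_mono; [intro; apply condw_nonneg| lia].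
      + apply Rlt_le_trans with (psum (fun i => condw (C i) (u ++ [a])) N1); [apply H1; lia|]. apply psum_mono; [intro; apply condw_nonneg| lia]. }
  destruct (HN M) as [N HNa].
  assert (H1 : t' * psum p M <= psum (fun a => p a * psum (fun i => condw (C i) (u ++ [a])) N) M).
  { rewrite <- psum_scal. apply psum_le_lt. intros a Ha. specialize (HNa a Ha).
    pose proof (p_pos a). nra. }
  assert (H2 : psum (fun a => p a * psum (fun i => condw (C i) (u ++ [a])) N) M
               <= psum (fun i => condw (C i) u) N).
  { rewrite (psum_ext _ (fun a => psum (fun i => p a * condw (C i) (u ++ [a])) N)).
    2:{ intro a; rewrite psum_scal; reflexivity. }
    rewrite psum_swap. apply psum_le. intro i. apply condw_step. }
  specialize (HG N). rewrite psum_p in H1.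
  assert (t' * (1 - (/ 2) ^ M) > t); [|lra].
  assert (0 < t') by lra.
  assert ((/2)^M * t' < t' - t).
  { apply (Rmult_lt_compat_r t') in HM; auto. unfold Rdiv in HM.
    rewrite Rmult_assoc, Rinv_l in HM; lra. }
  lra.
Qed.

Definition tl (s : R) (k : nat) : R := 1 - (1 - s) * (/2) ^ k.

Fixpoint path (C : nat -> list nat) (s : R) (k : nat) : list nat :=
  match k with
  | O => []
  | S k => path C s k ++ [epsilon (inhabits O) (fun a => Good C (tl s (S k)) (path C s k ++ [a]))]
  end.

Lemma path_len C s k : length (path C s k) = k.
Proof. induction k; simpl; [reflexivity| rewrite length_app, IHk; simpl; lia]. Qed.

Lemma path_good C s k : 0 <= s < 1 -> Good C s [] -> Good C (tl s k) (path C s k).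
Proof.
  intros Hs H0. induction k.
  - simpl. unfold tl. replace (1 - (1 - s) * (/2)^0) with s by (simpl; ring). exact H0.
  - simpl. apply (epsilon_spec (inhabits O) (fun a => Good C (tl s (S k)) (path C s k ++ [a]))).
    apply (Good_step C (tl s k)); auto.
    + unfold tl. simpl. pose proof (half_pow_pos k). nra.
    + unfold tl. pose proof (half_pow_pos k). assert ((/2)^k <= 1).
      { clear. induction k; simpl; [lra|]. pose proof (half_pow_pos k); lra. } nra.
Qed.

Lemma path_prefix C s k j : (j < k)%nat -> nth j (path C s k) O = nth j (path C s (S j)) O.
Proof.
  intros H; induction H.
  - reflexivity.
  - simpl. rewrite app_nth1; auto. rewrite path_len; lia.
Qed.

Lemma condw_match D u : (length D <= length u)%nat ->
  (forall j, (j < length D)%nat -> nth j D O = nth j u O) -> condw D u = 1.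
Proof.
  revert u; induction D as [|d D IH]; intros u Hl Hn; [reflexivity|].
  destruct u as [|b u]; simpl in Hl; [lia|].
  cbn [condw]. assert (d = b) by (apply (Hn O); simpl; lia). subst.
  rewrite Nat.eqb_refl. apply IH; [lia|]. intros j Hj. apply (Hn (S j)). simpl; lia.
Qed.

Lemma Pout_full : Pout (fun _ => True) = 1.
Proof.
  apply Rle_antisym; [apply Pout_le1|].
  apply Pout_lb. intros C s Hc Hs.
  destruct (Rlt_dec s 1) as [Hlt|]; [|lra]. exfalso.
  assert (Hs0 : 0 <= s).
  { apply (lim_ge _ _ _ O Hs). intros; apply psum_nonneg; intro; left; apply w_pos. }
  assert (HG0 : Good C s []).
  { intro N. rewrite (psum_ext _ (fun i => w (C i))) by (intro; apply condw_nil).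
    apply hasSum_ge_psum; auto. intro; left; apply w_pos. }
  set (om := fun j => nth j (path C s (S j)) O).
  destruct (Hc om I) as [i Hi].
  set (L := length (C i)).
  pose proof (path_good C s L (conj Hs0 Hlt) HG0 (S i)) as HG. simpl in HG.
  assert (H1 : condw (C i) (path C s L) = 1).
  { apply condw_match. rewrite path_len; unfold L; lia.
    intros j Hj. rewrite <- (Hi j Hj). unfold om. symmetry. apply path_prefix. exact Hj. }
  pose proof (psum_nonneg (fun i0 => condw (C i0) (path C s L)) i (fun _ => condw_nonneg _ _)).
  rewrite H1 in HG. unfold tl in HG. pose proof (half_pow_pos L). nra.
Qed.

Definition ocons (a : nat) (om : Omega) : Omega := fun j => match j with O => a | S j => om j end.
Definition otl (om : Omega) : Omega := fun j => om (S j).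
Definition Sec (a : nat) (Z : Omega -> Prop) : Omega -> Prop := fun om => Z (ocons a om).

Lemma ocons_otl om : ocons (om O) (otl om) = om.
Proof. apply functional_extensionality; intros [|j]; reflexivity. Qed.

Lemma cyl_cons b l om : cyl (b :: l) om <-> om O = b /\ cyl l (otl om).
Proof.
  unfold cyl, otl; simpl; split.
  - intros H; split; [apply (H O); lia|]. intros j Hj; apply (H (S j)); lia.
  - intros [H0 H] [|j] Hj; [auto| apply H; lia].
Qed.

Definition Ser (f : nat -> R) : R := epsilon (inhabits 0) (fun s => hasSum f s).

Lemma Ser_spec f : (exists s, hasSum f s) -> hasSum f (Ser f).
Proof. intros H; apply (epsilon_spec (inhabits 0) (fun s => hasSum f s) H). Qed.

Definition cw (a : nat) (l : list nat) : R := condw l [a].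

Lemma cw_bound a l : p a * cw a l <= w l.
Proof.
  pose proof (condw_step l [] (S a)) as H. cbn [psum app] in H. rewrite condw_nil in H.
  pose proof (psum_nonneg (fun a0 => p a0 * condw l [a0]) a (fun i => Rmult_le_pos _ _ (Rlt_le _ _ (p_pos i)) (condw_nonneg l [i]))).
  assert (0 <= p a * cw a l) by (pose proof (p_pos a); pose proof (condw_nonneg l [a]); unfold cw; nra).
  unfold cw in *; lra.
Qed.

Lemma cw_has a C s : hasSum (fun i => w (C i)) s -> hasSum (fun i => cw a (C i)) (Ser (fun i => cw a (C i))).
Proof.
  intros Hs. apply Ser_spec.
  destruct (hasSum_bounded (fun i => cw a (C i)) (s / p a)) as [t [Ht _]].
  - intro; apply condw_nonneg.
  - intro n. pose proof (p_pos a).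
    assert (p a * psum (fun i => cw a (C i)) n <= s).
    { rewrite <- psum_scal. eapply Rle_trans; [apply psum_le; intro; apply cw_bound|].
      apply hasSum_ge_psum; auto. intro; left; apply w_pos. }
    apply (Rmult_le_reg_l (p a)); auto. unfold Rdiv. rewrite <- Rmult_assoc.
    rewrite (Rmult_comm (p a) s), Rmult_assoc, Rinv_r; lra.
  - eauto.
Qed.

Definition secC (C : nat -> list nat) (a K : nat) (i : nat) : list nat :=
  match C i with
  | [] => []
  | b :: t => if Nat.eqb b a then t else repeat O (S i + K)
  end.

Lemma secC_cov Z C a K : Cov Z C -> Cov (Sec a Z) (secC C a K).
Proof.
  intros Hc om Hz. destruct (Hc _ Hz) as [i Hi]. exists i. unfold secC.
  destruct (C i) as [|b t] eqn:E.
  - intros j Hj; simpl in Hj; lia.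
  - apply cyl_cons in Hi. destruct Hi as [H0 H1]. simpl in H0. subst b.
    rewrite Nat.eqb_refl. exact H1.
Qed.

Lemma secC_w C a K i : w (secC C a K i) <= cw a (C i) + w (repeat O (S i + K)).
Proof.
  unfold secC, cw. pose proof (w_pos (repeat O (S i + K))).
  destruct (C i) as [|b t].
  - rewrite w_nil; cbn [condw]; lra.
  - cbn [condw]. destruct (Nat.eqb b a); [rewrite condw_nil; lra|].
    lra.
Qed.

Lemma hasSum_finsum (g : nat -> nat -> R) (T : nat -> R) M :
  (forall a, hasSum (g a) (T a)) ->
  hasSum (fun i => psum (fun a => g a i) M) (psum T M).
Proof.
  intros H. induction M; simpl.
  - apply hasSum_zero.
  - apply hasSum_plus; auto.
Qed.

Lemma decomp_ge Z M : psum (fun a => p a * Pout (Sec a Z)) M <= Pout Z.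
Proof.
  apply Pout_lb. intros C s Hc Hs.
  apply le_of_pow. intro K.
  set (T := fun a => Ser (fun i => cw a (C i))).
  assert (HT : forall a, Pout (Sec a Z) <= T a + (/2)^K).
  { intro a. apply (Pout_ub _ (secC C a K)); [apply secC_cov; auto|].
    intro n. eapply Rle_trans; [apply psum_le; intro; apply secC_w|].
    rewrite psum_plus. pose proof (psum_tiny K n).
    pose proof (hasSum_ge_psum (fun i => cw a (C i)) _ n (fun i => condw_nonneg _ _) (cw_has a C s Hs)).
    unfold T; lra. }
  assert (H1 : psum (fun a => p a * Pout (Sec a Z)) M <= psum (fun a => p a * T a) M + (/2)^K).
  { eapply Rle_trans. apply psum_le. intro a. apply Rmult_le_compat_l; [left; apply p_pos| apply HT].
    rewrite (psum_ext _ (fun a => p a * T a + (/2)^K * p a)) by (intro; ring).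
    rewrite psum_plus, psum_scal, psum_p. pose proof (half_pow_pos K); pose proof (half_pow_pos M). nra. }
  assert (H2 : psum (fun a => p a * T a) M <= s).
  { apply (hasSum_le (fun i => psum (fun a => p a * cw a (C i)) M) (fun i => w (C i))); auto.
    - apply hasSum_finsum. intro a. apply hasSum_scal. apply (cw_has a C s Hs).
    - intro i. pose proof (condw_step (C i) [] M) as X. cbn [app] in X. rewrite condw_nil in X. exact X. }
  lra.
Qed.

Lemma divmod_eq q r K : (r < K)%nat -> ((q * K + r) / K = q /\ (q * K + r) mod K = r)%nat.
Proof.
  intros H. assert (Hd : ((q * K + r) / K = q)%nat).
  { rewrite Nat.div_add_l by lia. rewrite Nat.div_small by lia. lia. }
  split; auto. pose proof (Nat.div_mod (q * K + r) K) as X. rewrite Hd in X. lia.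
Qed.

Lemma psum_block f n K : psum f (n * K) = psum (fun q => psum (fun r => f (q * K + r)%nat) K) n.
Proof.
  induction n; simpl; [reflexivity|].
  replace (K + n * K)%nat with (n * K + K)%nat by lia. rewrite psum_add, IHn. reflexivity.
Qed.

Definition mergeC (D : nat -> nat -> list nat) (M i : nat) : list nat :=
  let r := (i mod (S M))%nat in let q := (i / (S M))%nat in
  if Nat.ltb r M then r :: D r q else [(M + q)%nat].

Lemma decomp_le Z M e : 0 < e ->
  Pout Z <= psum (fun a => p a * Pout (Sec a Z)) M + e + (/2)^M.
Proof.
  intros He.
  set (D := fun a => epsilon (inhabits (fun _ : nat => @nil nat))
              (fun C => Cov (Sec a Z) C /\ forall n, psum (fun i => w (C i)) n <= Pout (Sec a Z) + e)).
  assert (HD : forall a, Cov (Sec a Z) (D a) /\ forall n, psum (fun i => w (D a i)) n <= Pout (Sec a Z) + e).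
  { intro a. unfold D. apply (epsilon_spec (inhabits (fun _ : nat => @nil nat))
              (fun C => Cov (Sec a Z) C /\ forall n, psum (fun i => w (C i)) n <= Pout (Sec a Z) + e)).
    apply Pout_approx; auto. }
  apply (Pout_ub Z (mergeC D M)).
  - intros om Hz. set (a := om O).
    destruct (Nat.ltb_spec a M) as [Ha|Ha].
    + assert (Hs : Sec a Z (otl om)) by (unfold Sec, a; rewrite ocons_otl; auto).
      destruct (proj1 (HD a) _ Hs) as [q Hq].
      exists (q * S M + a)%nat. unfold mergeC.
      destruct (divmod_eq q a (S M)) as [E1 E2]; [lia|]. rewrite E1, E2.
      destruct (Nat.ltb_spec a M); [|lia]. apply cyl_cons; split; auto.
    + exists ((a - M) * S M + M)%nat. unfold mergeC.
      destruct (divmod_eq (a - M) M (S M)) as [E1 E2]; [lia|]. rewrite E1, E2.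
      destruct (Nat.ltb_spec M M); [lia|]. apply cyl_single. unfold a; lia.
  - intro n.
    apply Rle_trans with (psum (fun i => w (mergeC D M i)) (n * S M)).
    { apply psum_mono; [intro; left; apply w_pos| destruct n; simpl; lia]. }
    rewrite psum_block, psum_swap. simpl psum at 1.
    assert (HL : psum (fun q => w (mergeC D M (q * S M + M)%nat)) n <= (/2)^M).
    { rewrite (psum_ext _ (fun q => (/2)^M * p q)).
      - rewrite psum_scal, psum_p. pose proof (half_pow_pos M); pose proof (half_pow_pos n); nra.
      - intro q. unfold mergeC. destruct (divmod_eq q M (S M)) as [E1 E2]; [lia|]. rewrite E1, E2.
        destruct (Nat.ltb_spec M M); [lia|]. rewrite w_cons, w_nil. unfold p. replace (S (M + q)) with (M + S q)%nat by lia. rewrite pow_add.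
        simpl. ring. }
    assert (HR : psum (fun j => psum (fun q => w (mergeC D M (q * S M + j)%nat)) n) M
                 <= psum (fun a => p a * Pout (Sec a Z)) M + e).
    { apply Rle_trans with (psum (fun a => p a * Pout (Sec a Z) + e * p a) M).
      - apply psum_le_lt. intros j Hj.
        rewrite (psum_ext _ (fun q => p j * w (D j q))).
        + rewrite psum_scal. pose proof (proj2 (HD j) n). pose proof (p_pos j). nra.
        + intro q. unfold mergeC. destruct (divmod_eq q j (S M)) as [E1 E2]; [lia|]. rewrite E1, E2.
          destruct (Nat.ltb_spec j M); [|lia]. apply w_cons.
      - rewrite psum_plus, psum_scal, psum_p. pose proof (half_pow_pos M). nra. }
    lra.
Qed.

Theorem decomp Z : hasSum (fun a => p a * Pout (Sec a Z)) (Pout Z).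
Proof.
  destruct (hasSum_bounded (fun a => p a * Pout (Sec a Z)) (Pout Z)) as [L [HL HLe]].
  - intro a. pose proof (p_pos a); pose proof (Pout_nonneg (Sec a Z)); nra.
  - apply decomp_ge.
  - replace (Pout Z) with L; auto. apply Rle_antisym; auto.
    apply le_of_pow; intro M. apply le_of_eps; intros e He.
    pose proof (decomp_le Z M e He).
    pose proof (hasSum_ge_psum _ _ M (fun a => Rmult_le_pos _ _ (Rlt_le _ _ (p_pos a)) (Pout_nonneg (Sec a Z))) HL).
    lra.
Qed.

Lemma partA F : P0 (preim T0 F) = P0 F.
Proof.
  pose proof (decomp (preim Theta (preim T0 F))) as H.
  change (hasSum (fun a => p a * P0 F) (P0 (preim T0 F))) in H.
  pose proof (hasSum_scal (P0 F) _ _ hasSum_p) as H2.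
  apply (hasSum_ext _ (fun a => p a * P0 F)) in H2; [|intro; ring].
  rewrite (hasSum_unique _ _ _ H H2). ring.
Qed.

Definition Sn (n : nat) : Omega -> Prop := fun om => forall j, (j < n)%nat -> Theta om j = true.
Definition gS (n a : nat) : R := Pout (Sec a (Sn n)).

Lemma gS_rec n a : gS (S n) a = p (S a) * gS n (S a).
Proof.
  pose proof (decomp (Sec a (Sn (S n)))) as H. unfold gS.
  rewrite (hasSum_single _ _ (S a) H).
  - f_equal. apply Pout_ext. intro om. unfold Sec, Sn. split.
    + intros Hj j Hlt. apply (Hj (S j)); lia.
    + intros Hj [|j] Hlt. * unfold Theta, theta; simpl. apply Nat.eqb_refl.
      * apply (Hj j); lia.
  - intros x Hx. rewrite (Pout_empty _). ring.
    intros om Hs. unfold Sec, Sn in Hs. specialize (Hs O ltac:(lia)).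
    unfold Theta, theta in Hs; simpl in Hs. apply Nat.eqb_eq in Hs. auto.
Qed.

Lemma gS_0 a b : gS 0 a = gS 0 b.
Proof. unfold gS. apply Pout_ext. intro om; unfold Sec, Sn; split; intros _ j Hj; lia. Qed.

Lemma gS_nonneg n a : 0 <= gS n a.
Proof. apply Pout_nonneg. Qed.

Lemma gS_bound n a : gS (S n) a <= p (S (a + n)) * gS n a.
Proof.
  revert a; induction n; intro a.
  - rewrite gS_rec, (gS_0 (S a) a), Nat.add_0_r. lra.
  - rewrite gS_rec. rewrite (gS_rec n a).
    specialize (IHn (S a)). pose proof (p_pos (S a)).
    replace (S (a + S n)) with (S (S a + n)) by lia. nra.
Qed.

Lemma Sn_step n : Pout (Sn (S n)) <= p (S n) * Pout (Sn n).
Proof.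
  pose proof (decomp (Sn (S n))) as H1. pose proof (decomp (Sn n)) as H2.
  apply (hasSum_scal (p (S n))) in H2.
  apply (hasSum_le _ _ _ _ H1 H2). intro a.
  change (p a * gS (S n) a <= p (S n) * (p a * gS n a)).
  pose proof (gS_bound n a). pose proof (p_le (S n) (S (a + n)) ltac:(lia)).
  pose proof (gS_nonneg n a). pose proof (p_pos a).
  assert (gS (S n) a <= p (S n) * gS n a).
  { eapply Rle_trans; [exact H|]. apply Rmult_le_compat_r; auto. }
  replace (p (S n) * (p a * gS n a)) with (p a * (p (S n) * gS n a)) by ring.
  apply Rmult_le_compat_l; lra.
Qed.

Lemma partC (wb : Omega0) : (forall j, wb j = true) ->
  Un_cv (fun n => P0 (inter (Acyl wb (S n)) (Acyl wb n)) / P0 (Acyl wb n)) 0.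
Proof.
  intros Hw.
  assert (E1 : forall n, P0 (Acyl wb n) = Pout (Sn n)).
  { intro n. apply Pout_ext. intro om. unfold preim, Acyl, Sn. split; intros H j Hj; rewrite H, ?Hw; auto. }
  assert (E2 : forall n, P0 (inter (Acyl wb (S n)) (Acyl wb n)) = Pout (Sn (S n))).
  { intro n. apply Pout_ext. intro om. unfold preim, inter, Acyl, Sn. split.
    - intros [H _] j Hj; rewrite H, ?Hw; auto.
    - intros H; split; intros j Hj; rewrite H, ?Hw; auto; lia. }
  assert (Hb : forall n, 0 <= Pout (Sn (S n)) / Pout (Sn n) <= (/2) ^ n).
  { intro n. pose proof (Sn_step n). pose proof (Pout_nonneg (Sn (S n))). pose proof (Pout_nonneg (Sn n)).
    pose proof (p_le n (S n) ltac:(lia)). assert (p n <= (/2)^n) by (unfold p; simpl; pose proof (half_pow_pos n); lra).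
    pose proof (p_pos (S n)).
    destruct (Req_dec (Pout (Sn n)) 0) as [Hz|Hz].
    - rewrite Hz in *. assert (Hz2 : Pout (Sn (S n)) = 0) by nra. rewrite Hz2. unfold Rdiv; rewrite Rmult_0_l. pose proof (half_pow_pos n); lra.
    - split. unfold Rdiv; apply Rmult_le_pos; [lra| left; apply Rinv_0_lt_compat; lra].
      apply (Rmult_le_reg_r (Pout (Sn n))); [lra|]. unfold Rdiv; rewrite Rmult_assoc, Rinv_l; nra. }
  intros e He. destruct (small_pow e He) as [N HN]. exists N. intros n Hn.
  unfold Rdist. rewrite E1, E2, Rminus_0_r. specialize (Hb n).
  rewrite Rabs_right by lra.
  assert ((/2)^n <= (/2)^N).
  { replace n with (N + (n - N))%nat by lia. rewrite pow_add.
    assert ((/2)^(n-N) <= 1). { clear. induction (n-N)%nat; simpl; [lra|]. pose proof (half_pow_pos n0); lra. }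
    pose proof (half_pow_pos N); nra. }
  lra.
Qed.

Definition bcons (b : bool) (v : Omega0) : Omega0 := fun j => match j with O => b | S j => v j end.
Definition Fb (b : bool) (F : Omega0 -> Prop) : Omega0 -> Prop := fun v => F (bcons b v).
Definition GG (F : Omega0 -> Prop) (k : nat) : R := Pout (fun om => F (Theta (ocons k om))).
Definition AA (F : Omega0 -> Prop) : R := Pout (fun om => F (Theta om)).

Lemma Theta_ocons2 k x om : Theta (ocons k (ocons x om)) = bcons (theta k x) (Theta (ocons x om)).
Proof. apply functional_extensionality; intros [|j]; reflexivity. Qed.

Lemma GA F : hasSum (fun x => p x * GG F x) (AA F).
Proof. exact (decomp (fun om => F (Theta om))). Qed.

Lemma GG_nonneg F k : 0 <= GG F k.
Proof. apply Pout_nonneg. Qed.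
Lemma AA_nonneg F : 0 <= AA F.
Proof. apply Pout_nonneg. Qed.
Lemma GG_le1 F k : GG F k <= 1.
Proof. apply Pout_le1. Qed.

Lemma GG_eq F k : GG F k = AA (Fb false F) - p (S k) * GG (Fb false F) (S k) + p (S k) * GG (Fb true F) (S k).
Proof.
  pose proof (decomp (fun om => F (Theta (ocons k om)))) as H.
  apply (hasSum_ext _ (fun x => p x * GG (Fb (Nat.eqb x (S k)) F) x)) in H.
  2:{ intro x. f_equal. apply Pout_ext. intro om. unfold Sec, Fb. rewrite Theta_ocons2. reflexivity. }
  pose proof (hasSum_modif _ (fun x => p x * GG (Fb (Nat.eqb x (S k)) F) x) (S k) _ (GA (Fb false F))) as H2.
  assert (H3 : hasSum (fun x => p x * GG (Fb (Nat.eqb x (S k)) F) x)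
      (AA (Fb false F) + (p (S k) * GG (Fb (Nat.eqb (S k) (S k)) F) (S k) - p (S k) * GG (Fb false F) (S k)))).
  { apply H2. intros x Hx. destruct (Nat.eqb_spec x (S k)); [contradiction| reflexivity]. }
  unfold GG at 1. rewrite (hasSum_unique _ _ _ H H3). rewrite Nat.eqb_refl. ring.
Qed.

Fixpoint Afam (F : Omega0 -> Prop) (L : nat) : R :=
  match L with O => AA (Fb false F) | S L => Afam (Fb true F) L end.
Fixpoint Rr (k L : nat) : R :=
  match L with O => 1 | S L => p (S k) * Rr (S k) L end.

Lemma Afam_nonneg F L : 0 <= Afam F L.
Proof. revert F; induction L; intro F; simpl; [apply AA_nonneg| apply IHL]. Qed.

Lemma Rr_nonneg k L : 0 <= Rr k L.
Proof. revert k; induction L; intro k; simpl; [lra|]. pose proof (p_pos (S k)); specialize (IHL (S k)); nra. Qed.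

Lemma Rr_mono L : forall j k, (j <= k)%nat -> Rr k L <= Rr j L.
Proof.
  induction L; intros j k H; simpl; [lra|].
  pose proof (p_le (S j) (S k) ltac:(lia)). pose proof (IHL (S j) (S k) ltac:(lia)).
  pose proof (Rr_nonneg (S k) L). pose proof (p_pos (S k)). nra.
Qed.

Lemma Rr_small k M : Rr k M <= (/2) ^ M.
Proof.
  revert k; induction M; intro k; simpl; [lra|].
  specialize (IHM (S k)). pose proof (Rr_nonneg (S k) M).
  assert (p (S k) <= /2) by (pose proof (p_le O (S k) ltac:(lia)); unfold p in *; simpl in *; lra).
  pose proof (half_pow_pos M). nra.
Qed.

Lemma upperU M : forall F k, GG F k <= psum (fun L => Rr k L * Afam F L) M + Rr k M.
Proof.
  induction M; intros F k.
  - simpl. pose proof (GG_le1 F k); lra.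
  - rewrite psum_front. simpl Rr at 1. simpl Afam at 1.
    rewrite (psum_ext (fun i => Rr k (S i) * Afam F (S i)) (fun i => p (S k) * (Rr (S k) i * Afam (Fb true F) i))).
    2:{ intro i. simpl. ring. }
    rewrite psum_scal. simpl Rr.
    rewrite GG_eq. specialize (IHM (Fb true F) (S k)).
    pose proof (GG_nonneg (Fb false F) (S k)). pose proof (p_pos (S k)).
    assert (p (S k) * GG (Fb true F) (S k) <= p (S k) * (psum (fun L => Rr (S k) L * Afam (Fb true F) L) M + Rr (S k) M))
      by (apply Rmult_le_compat_l; lra).
    nra.
Qed.

Lemma lowerL M : forall F j, psum (fun L => Rr (S j) L * Afam F L) M <= GG F j + GG F (S j).
Proof.
  induction M; intros F j.
  - simpl. pose proof (GG_nonneg F j); pose proof (GG_nonneg F (S j)); lra.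
  - rewrite psum_front. simpl Rr at 1. simpl Afam at 1.
    rewrite (psum_ext (fun i => Rr (S j) (S i) * Afam F (S i)) (fun i => p (S (S j)) * (Rr (S (S j)) i * Afam (Fb true F) i))).
    2:{ intro i. simpl. ring. }
    rewrite psum_scal.
    rewrite (GG_eq F j), (GG_eq F (S j)).
    specialize (IHM (Fb true F) (S j)).
    pose proof (hasSum_two _ _ (S j) (S (S j)) (fun x => Rmult_le_pos _ _ (Rlt_le _ _ (p_pos x)) (GG_nonneg (Fb false F) x)) (GA (Fb false F)) ltac:(lia)) as H2.
    cbv beta in H2.
    pose proof (p_le (S j) (S (S j)) ltac:(lia)).
    pose proof (GG_nonneg (Fb true F) (S j)). pose proof (p_pos (S (S j))).
    assert (p (S (S j)) * psum (fun L => Rr (S (S j)) L * Afam (Fb true F) L) M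
            <= p (S (S j)) * (GG (Fb true F) (S j) + GG (Fb true F) (S (S j))))
      by (apply Rmult_le_compat_l; lra).
    assert (p (S (S j)) * GG (Fb true F) (S j) <= p (S j) * GG (Fb true F) (S j))
      by (apply Rmult_le_compat_r; lra).
    lra.
Qed.

Lemma keyK F k : GG F k <= 4 * AA F.
Proof.
  pose proof (hasSum_two _ _ O 1 (fun x => Rmult_le_pos _ _ (Rlt_le _ _ (p_pos x)) (GG_nonneg F x)) (GA F) ltac:(lia)) as H2.
  cbv beta in H2. unfold p at 1 2 in H2. simpl in H2.
  pose proof (GG_nonneg F O); pose proof (GG_nonneg F 1).
  destruct k as [|k].
  - lra.
  - assert (GG F (S k) <= GG F O + GG F 1); [|lra].
    apply le_of_pow. intro M.
    pose proof (upperU M F (S k)). pose proof (lowerL M F O). pose proof (Rr_small (S k) M).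
    assert (psum (fun L => Rr (S k) L * Afam F L) M <= psum (fun L => Rr 1 L * Afam F L) M).
    { apply psum_le. intro L. apply Rmult_le_compat_r; [apply Afam_nonneg| apply Rr_mono; lia]. }
    lra.
Qed.

Definition Det (N : nat) (X : Omega -> Prop) : Prop :=
  forall om om', (forall j, (j < N)%nat -> om j = om' j) -> (X om <-> X om').

Definition shiftk (N : nat) (om : Omega) : Omega := fun j => om (j + N)%nat.

Lemma shiftk_ocons N a om : shiftk (S N) (ocons a om) = shiftk N om.
Proof. apply functional_extensionality; intro j. unfold shiftk. rewrite Nat.add_succ_r. reflexivity. Qed.

Lemma shiftk0 om : shiftk 0 om = om.
Proof. apply functional_extensionality; intro j. unfold shiftk. rewrite Nat.add_0_r. reflexivity. Qed.

Lemma Det_Sec N X a : Det (S N) X -> Det N (Sec a X).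
Proof.
  intros H om om' He. unfold Sec. apply H. intros [|j] Hj; simpl; auto. apply He; lia.
Qed.

Lemma Det_mono N M X : (N <= M)%nat -> Det N X -> Det M X.
Proof. intros HNM H om om' He. apply H. intros; apply He; lia. Qed.

Lemma Det0 X : Det 0 X -> (forall om, X om) \/ (forall om, ~ X om).
Proof.
  intros H. destruct (classic (X (fun _ => O))) as [Hx|Hx].
  - left; intro om. apply (H (fun _ => O)); auto. intros; lia.
  - right; intros om Ho. apply Hx. apply (H om); auto. intros; lia.
Qed.

Lemma B1 N : forall X, Det N X -> forall Y : Omega -> Prop,
  Pout (fun om => X om /\ Y (shiftk N om)) = Pout X * Pout Y.
Proof.
  induction N; intros X HX Y.
  - destruct (Det0 X HX) as [Ht|Hf].
    + rewrite (Pout_ext X (fun _ => True)) by (intro; split; auto). rewrite Pout_full.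
      rewrite Rmult_1_l. apply Pout_ext. intro om. rewrite shiftk0. split; [tauto| auto].
    + rewrite (Pout_empty X Hf). rewrite Pout_empty. ring. intros om [H _]. apply (Hf om H).
  - pose proof (decomp (fun om => X om /\ Y (shiftk (S N) om))) as H1.
    apply (hasSum_ext _ (fun a => Pout Y * (p a * Pout (Sec a X)))) in H1.
    2:{ intro a.
        rewrite (Pout_ext (Sec a _) (fun om => Sec a X om /\ Y (shiftk N om))).
        - rewrite (IHN (Sec a X) (Det_Sec N X a HX) Y). ring.
        - intro om. unfold Sec. rewrite shiftk_ocons. reflexivity. }
    pose proof (hasSum_scal (Pout Y) _ _ (decomp X)) as H2.
    rewrite (hasSum_unique _ _ _ H1 H2). ring.
Qed.

Lemma B2 n : forall X, Det (S n) X -> forall F : Omega0 -> Prop,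
  Pout (fun om => X om /\ F (Theta (shiftk n om))) <= 4 * AA F * Pout X.
Proof.
  induction n; intros X HX F.
  - pose proof (decomp (fun om => X om /\ F (Theta (shiftk 0 om)))) as H1.
    pose proof (hasSum_scal (4 * AA F) _ _ (decomp X)) as H2.
    apply (hasSum_le _ _ _ _ H1 H2). intro a. pose proof (p_pos a).
    assert (Pout (Sec a (fun om => X om /\ F (Theta (shiftk 0 om)))) <= 4 * AA F * Pout (Sec a X)).
    { destruct (Det0 _ (Det_Sec 0 X a HX)) as [Ht|Hf].
      - rewrite (Pout_ext (Sec a X) (fun _ => True)) by (intro; split; auto). rewrite Pout_full.
        rewrite Rmult_1_r. eapply Rle_trans; [|apply (keyK F a)]. unfold GG. apply Pout_mono.
        intros om [_ Hf]. rewrite shiftk0 in Hf. exact Hf.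
      - rewrite (Pout_empty (Sec a X) Hf). rewrite Pout_empty. lra. intros om [Hx _]. apply (Hf om Hx). }
    replace (4 * AA F * (p a * Pout (Sec a X))) with (p a * (4 * AA F * Pout (Sec a X))) by ring.
    apply Rmult_le_compat_l; lra.
  - pose proof (decomp (fun om => X om /\ F (Theta (shiftk (S n) om)))) as H1.
    pose proof (hasSum_scal (4 * AA F) _ _ (decomp X)) as H2.
    apply (hasSum_le _ _ _ _ H1 H2). intro a. pose proof (p_pos a).
    assert (Pout (Sec a (fun om => X om /\ F (Theta (shiftk (S n) om)))) <= 4 * AA F * Pout (Sec a X)).
    { rewrite (Pout_ext _ (fun om => Sec a X om /\ F (Theta (shiftk n om)))).
      - apply IHn. apply Det_Sec; auto.
      - intro om. unfold Sec. rewrite shiftk_ocons. reflexivity. }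
    replace (4 * AA F * (p a * Pout (Sec a X))) with (p a * (4 * AA F * Pout (Sec a X))) by ring.
    apply Rmult_le_compat_l; lra.
Qed.

Lemma Fcoord_det n E : Fcoord n E -> forall v v', (forall j, (j < n)%nat -> v j = v' j) -> (E v <-> E v').
Proof.
  intros H. induction H; intros v v' He.
  - destruct H as [j [b [Hj ->]]]. rewrite (He j Hj). reflexivity.
  - specialize (IHsigma_gen v v' He). tauto.
  - split; intros [i Hi]; exists i; [apply (H0 i v v' He)| apply (H0 i v v' He)]; auto.
  - rewrite <- (H v), <- (H v'). auto.
Qed.

Definition psi0 (m : nat) : R := match m with O => 4 | S _ => 0 end.

Lemma partB : psi_mixing P0.
Proof.
  exists psi0. split; [intros [|m]; simpl; lra|]. split.
  { intros e He. exists 1%nat. intros n Hn. destruct n; [lia|]. simpl. unfold Rdist.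
    rewrite Rminus_0_r, Rabs_R0; lra. }
  intros m n E F HE HF.
  set (X := fun om => E (Theta om)).
  assert (HX : Det (S n) X).
  { intros om om' He. unfold X. apply (Fcoord_det n E HE). intros j Hj.
    unfold Theta. rewrite (He j), (He (S j)) by lia. reflexivity. }
  assert (Hq : P0 (inter E (preim (T0iter (n + m)) F)) = Pout (fun om => X om /\ (fun om => F (Theta om)) (shiftk (n + m) om))).
  { apply Pout_ext. intro om. reflexivity. }
  assert (HPE : P0 E = Pout X) by reflexivity.
  assert (HPF : P0 F = AA F) by reflexivity.
  rewrite Hq, HPE, HPF.
  pose proof (Pout_nonneg X). pose proof (AA_nonneg F).
  destruct m as [|m].
  - rewrite Nat.add_0_r. simpl psi0.
    pose proof (B2 n X HX F) as HB. cbv beta in HB.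
    pose proof (Pout_nonneg (fun om => X om /\ F (Theta (shiftk n om)))).
    assert (0 <= Pout X * AA F) by nra.
    destruct (Rle_dec (Pout X * AA F) (Pout (fun om => X om /\ F (Theta (shiftk n om))))).
    + rewrite Rabs_right by lra. nra.
    + rewrite Rabs_left1 by lra. nra.
  - rewrite (B1 (n + S m) X (Det_mono (S n) (n + S m) X ltac:(lia) HX) (fun om => F (Theta om))).
    unfold AA. rewrite Rminus_diag, Rabs_R0. simpl psi0. lra.
Qed.

Theorem theorem8 :
  (forall F, F0 F -> P0 (preim T0 F) = P0 F) /\
  psi_mixing P0 /\
  (forall w : Omega0, (forall j, w j = true) ->
     Un_cv (fun n => P0 (inter (Acyl w (S n)) (Acyl w n)) / P0 (Acyl w n)) 0).
Proof.
  split; [intros F _; apply partA|]. split; [apply partB|]. apply partC.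
Qed.
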